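(* Let $k\ge 3$, let $\sigma=\sigma_1\cdots\sigma_k\in\mathfrak S_k$ be a consecutive pattern, and let $1\text{-}\sigma$ denote the generalized pattern $1\text{-}(\sigma_1+1)(\sigma_2+1)\cdots(\sigma_k+1)$. Then $$\lim_{n\to\infty}\left(\frac{\alpha_n(1\text{-}\sigma)}{n!}\right)^{1/n}=\lim_{n\to\infty}\left(\frac{\alpha_n(\sigma)}{n!}\right)^{1/n},$$ and in particular the left-hand limit exists.
   Context: $\mathfrak S_n$ is the symmetric group on $\{1,\dots,n\}$, permutations in one-line notation. A generalized pattern of length $m$ is a permutation $\sigma_1\cdots\sigma_m\in\mathfrak S_m$ with, between each pair of adjacent entries, either a dash ''-'' or nothing. A permutation $\pi\in\mathfrak S_n$ contains it if there are indices $i_1<\dots<i_m$ with $i_{j+1}=i_j+1$ whenever there is no dash between $\sigma_j$ and $\sigma_{j+1}$, and with $\pi_{i_a}<\pi_{i_b}$ iff $\sigma_a<\sigma_b$ for all $a,b$; otherwise $\pi$ avoids it. A consecutive pattern has no dashes. $\alpha_n(\sigma)$ is the number of permutations in $\mathfrak S_n$ avoiding $\sigma$. *)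

(* Defs.v *)
From HB Require Import structures.
From mathcomp Require Import all_boot all_order all_algebra all_fingroup.
From mathcomp Require Import all_classical all_reals all_analysis.
Set Implicit Arguments. Unset Strict Implicit. Unset Printing Implicit Defensive.
Import Order.TTheory GRing.Theory Num.Theory.

(* A generalized pattern of length m is given by its entries
   pat : 'I_m -> nat (0-based values; only relative order matters) and
   dash : nat -> bool, where dash j (for j.+1 < m) says that there is a
   dash between the entries at (0-based) positions j and j.+1. *)

Definition gcontains (n m : nat) (pat : 'I_m -> nat) (dash : nat -> bool)
  (pi : 'S_n) : bool :=
  [exists f : {ffun 'I_m -> 'I_n},
    [&& [forall a : 'I_m, forall b : 'I_m, (a < b)%N ==> (f a < f b)%N],
        [forall a : 'I_m, forall b : 'I_m,
           ((a.+1 == b) && ~~ dash a) ==> (val (f b) == (f a).+1)] &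
        [forall a : 'I_m, forall b : 'I_m,
           (val (pi (f a)) < val (pi (f b)))%N == (pat a < pat b)%N]]].

Definition alpha (n m : nat) (pat : 'I_m -> nat) (dash : nat -> bool) : nat :=
  #|[set pi : 'S_n | ~~ gcontains pat dash pi]|.

Definition consec (k : nat) (s : 'S_k) : 'I_k -> nat := fun i => val (s i).
Definition no_dash : nat -> bool := fun _ => false.

(* The generalized pattern 1-(s_1+1)...(s_k+1) of length k+1 (0-based values:
   first entry 0, then s_i + 1), with a single dash after the first entry. *)
Definition one_dash_pat (k : nat) (s : 'S_k) : 'I_k.+1 -> nat :=
  fun i => match unlift ord0 i with
           | None => 0%N
           | Some j => (val (s j)).+1
           end.
Definition one_dash : nat -> bool := fun j => j == 0%N.

Local Open Scope ring_scope.
Definition growth_seq (R : realType) (a : nat -> nat) : nat -> R :=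
  fun n => ((a n)%:R / (n`!)%:R) `^ (n%:R)^-1.

(* Main.v *)
Require Import Defs.
From HB Require Import structures.
From mathcomp Require Import all_boot all_order all_algebra all_fingroup.
From mathcomp Require Import all_classical all_reals all_analysis.
From mathcomp Require Import zify ring lra.
Set Implicit Arguments. Unset Strict Implicit. Unset Printing Implicit Defensive.
Import Order.TTheory GRing.Theory Num.Theory numFieldNormedType.Exports.

Section Comb.
Variables (m : nat) (pat : 'I_m -> nat) (dash : nat -> bool).

Definition contf (N : nat) (h : 'I_N -> nat) : bool :=
  [exists f : {ffun 'I_m -> 'I_N},
    [&& [forall a : 'I_m, forall b : 'I_m, (a < b)%N ==> (f a < f b)%N],
        [forall a : 'I_m, forall b : 'I_m,
           ((a.+1 == b) && ~~ dash a) ==> (val (f b) == (f a).+1)] &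
        [forall a : 'I_m, forall b : 'I_m,
           (h (f a) < h (f b))%N == (pat a < pat b)%N]]].

Lemma gcontainsE N (pi : 'S_N) :
  gcontains pat dash pi = contf (fun i => val (pi i)).
Proof. by []. Qed.

Lemma contf_ext N (h h' : 'I_N -> nat) :
  (forall i j, (h i < h j)%N = (h' i < h' j)%N) -> contf h = contf h'.
Proof.
move=> E; apply/existsP/existsP => -[f /and3P[H1 H2 H3]]; exists f;
  apply/and3P; split=> //; apply/forallP=> a; apply/forallP=> b;
  move/forallP: H3 => /(_ a) /forallP /(_ b); by rewrite E.
Qed.

Lemma contf_comp N M (e : 'I_M -> 'I_N) (c : nat) (h : 'I_N -> nat) :
  (forall i, val (e i) = c + val i) -> contf (fun i => h (e i)) -> contf h.
Proof.
move=> He /existsP[f /and3P[/forallP H1 /forallP H2 /forallP H3]].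
apply/existsP; exists [ffun a => e (f a)]; apply/and3P; split;
  apply/forallP=> a; apply/forallP=> b; rewrite !ffunE.
- apply/implyP=> ab; move/forallP: (H1 a) => /(_ b) /implyP /(_ ab).
  by rewrite !He ltn_add2l.
- apply/implyP=> ab; move/forallP: (H2 a) => /(_ b) /implyP /(_ ab) /eqP.
  by rewrite !He => ->; rewrite addnS.
- by move/forallP: (H3 a) => /(_ b).
Qed.

End Comb.

Section Std.
Variable (m : nat).
Implicit Types h : 'I_m -> nat.

Definition rk h (i : 'I_m) : nat := #|[set j | h j < h i]|.

Lemma rk_lt h i : rk h i < m.
Proof.
have P : [set j | h j < h i] \proper [set: 'I_m].
  apply/properP; split; first exact: finset.subsetT.
  by exists i; rewrite ?inE ?ltnn.
by move: (proper_card P); rewrite cardsT card_ord.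
Qed.

Definition std h (i : 'I_m) : 'I_m := Ordinal (rk_lt h i).

Lemma rk_mono h i j : injective h -> (rk h i < rk h j) = (h i < h j).
Proof.
move=> hinj; case: (ltngtP (h i) (h j)) => [lt|gt|eq].
- apply: proper_card; apply/properP; split.
    by apply/fintype.subsetP=> x; rewrite !inE => /ltn_trans; apply.
  by exists i; rewrite !inE ?ltnn.
- apply/negbTE; rewrite -leqNgt; apply: subset_leq_card.
  by apply/fintype.subsetP=> x; rewrite !inE => /ltn_trans; apply.
- by move/hinj: eq => ->; rewrite ltnn.
Qed.

Lemma std_inj h : injective h -> injective (std h).
Proof.
move=> hinj i j E0; have E : rk h i = rk h j by apply: (congr1 val E0).
have := rk_mono i j hinj; have := rk_mono j i hinj; rewrite E ltnn => A B.
by apply: hinj; apply/eqP; rewrite eqn_leq leqNgt -A leqNgt -B.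
Qed.

Definition stdf h : 'I_m -> 'I_m := if injectiveb (std h) then std h else id.

Lemma stdf_inj h : injective (stdf h).
Proof. by rewrite /stdf; case: injectiveP => // _ x y. Qed.

Definition stdp h : 'S_m := perm (@stdf_inj h).

Lemma stdpE h : injective h -> forall i, val (stdp h i) = rk h i.
Proof.
move=> hinj i; rewrite /stdp permE /stdf; case: injectiveP => // [] [].
exact: std_inj.
Qed.

Lemma stdp_order h : injective h -> forall i j,
  (val (stdp h i) < val (stdp h j)) = (h i < h j).
Proof. by move=> hinj i j; rewrite !stdpE // rk_mono. Qed.

Lemma rk_count h i : injective h -> rk h i = count (fun v => v < h i) (codom h).
Proof.
move=> _; rewrite /rk cardsE cardE /codom /image_mem count_map.
by rewrite size_filter -enumT; apply: eq_count => x; rewrite !inE.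
Qed.

Lemma count_split (v1 v2 : nat) (s : seq nat) : v1 < v2 ->
  count (fun v => v < v2) s =
  count (fun v => v < v1) s + count (fun v => (v1 <= v) && (v < v2)) s.
Proof.
move=> lt; elim: s => //= x s ->.
case: (ltnP x v1) => [xv1|xv1] /=.
  by rewrite (ltn_trans xv1 lt) add1n addnA.
by rewrite add0n addnCA.
Qed.

Lemma rk_recon (h1 h2 : 'I_m -> nat) :
  injective h1 -> injective h2 -> codom h1 =i codom h2 ->
  (forall i, rk h1 i = rk h2 i) -> forall i, h1 i = h2 i.
Proof.
move=> i1 i2 C E i.
have P : perm_eq (codom h1) (codom h2).
  by apply: uniq_perm => //; rewrite map_inj_uniq ?enum_uniq.
have key : forall v1 v2, v1 \in codom h2 -> v1 < v2 ->
   count (fun v => v < v1) (codom h2) < count (fun v => v < v2) (codom h2).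
  move=> v1 v2 v1in lt; rewrite (count_split _ lt) -{1}[count _ _]addn0 ltn_add2l.
  by rewrite -has_count; apply/hasP; exists v1; rewrite // leqnn.
have e1 : rk h1 i = count (fun v => v < h1 i) (codom h2).
  by rewrite rk_count //; move/seq.permP: P => ->.
have e2 : rk h2 i = count (fun v => v < h2 i) (codom h2) by rewrite rk_count.
have in1 : h1 i \in codom h2 by rewrite -C codom_f.
have in2 : h2 i \in codom h2 by rewrite codom_f.
case: (ltngtP (h1 i) (h2 i)) => // lt.
  by move: (key _ _ in1 lt); rewrite -e1 -e2 E ltnn.
by move: (key _ _ in2 lt); rewrite -e1 -e2 E ltnn.
Qed.

End Std.

Lemma card_le_inj (T U : finType) (S : {set T}) (D : {set U}) (F : T -> U) :
  {in S &, injective F} -> (forall x, x \in S -> F x \in D) -> #|S| <= #|D|.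
Proof.
move=> inj sub; rewrite -(card_in_imset inj); apply: subset_leq_card.
by apply/fintype.subsetP=> y /imsetP[x xS ->]; exact: sub.
Qed.

Lemma codom_eq M N (g1 g2 : 'I_M -> 'I_N) :
  [set g1 i | i in 'I_M] = [set g2 i | i in 'I_M] ->
  codom (fun i => val (g1 i)) =i codom (fun i => val (g2 i)).
Proof.
move=> E x; apply/codomP/codomP => -[i ->].
  have: g1 i \in [set g2 i | i in 'I_M] by rewrite -E imset_f.
  by case/imsetP=> j _ ->; exists j.
have: g2 i \in [set g1 i | i in 'I_M] by rewrite E imset_f.
by case/imsetP=> j _ ->; exists j.
Qed.

Section Gen.
Variables (k : nat) (pat : 'I_k -> nat) (dash : nat -> bool).

Definition Av n := [set pi : 'S_n | ~~ gcontains pat dash pi].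

Lemma alphaE n : alpha n pat dash = #|Av n|.
Proof. by []. Qed.

Lemma alpha_le_fact n : alpha n pat dash <= n`!.
Proof. by rewrite alphaE -card_Sn; exact: max_card. Qed.

Lemma val_inj_shift M N (e : 'I_M -> 'I_N) c :
  (forall i, val (e i) = c + val i) -> injective e.
Proof. by move=> He i j /(congr1 val); rewrite !He => /addnI /val_inj. Qed.

Lemma std_avoid N M (pi : 'S_N) (e : 'I_M -> 'I_N) c :
  (forall i, val (e i) = c + val i) -> ~~ gcontains pat dash pi ->
  stdp (fun i => val (pi (e i))) \in Av M.
Proof.
move=> He; rewrite inE !gcontainsE; apply: contra => H.
have hinj : injective (fun i => val (pi (e i))).
  by move=> i j /val_inj /perm_inj /(val_inj_shift He).
apply: (contf_comp He).
by rewrite -(contf_ext _ _ (stdp_order hinj)).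
Qed.

Lemma perm_val_inj N M (pi : 'S_N) (e : 'I_M -> 'I_N) :
  injective e -> injective (fun i => val (pi (e i))).
Proof. by move=> ei i j /val_inj /perm_inj /ei. Qed.

Lemma recon N M (p1 p2 : 'S_N) (e : 'I_M -> 'I_N) :
  injective e ->
  [set p1 (e i) | i in 'I_M] = [set p2 (e i) | i in 'I_M] ->
  stdp (fun i => val (p1 (e i))) = stdp (fun i => val (p2 (e i))) ->
  forall i, p1 (e i) = p2 (e i).
Proof.
move=> ei EA EP i; apply: val_inj.
have C := codom_eq (g1 := fun i => p1 (e i)) (g2 := fun i => p2 (e i)) EA.
have R' : forall j, rk (fun i => val (p1 (e i))) j = rk (fun i => val (p2 (e i))) j.
  by move=> j; rewrite -!stdpE ?EP //; exact: perm_val_inj.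
exact: (@rk_recon M (fun i => val (p1 (e i))) (fun i => val (p2 (e i)))
  (perm_val_inj (pi:=p1) ei) (perm_val_inj (pi:=p2) ei) C R' i).
Qed.

Lemma compl_shift m n (pi : 'S_(m + n)) :
  [set pi (rshift m j) | j in 'I_n] = ~: [set pi (lshift n i) | i in 'I_m].
Proof.
apply/setP=> y; rewrite inE; apply/imsetP/idP.
  case=> j _ ->; apply/imsetP => -[i _ /perm_inj /(congr1 val) /=].
  by move=> E; move: (ltn_ord i); rewrite -E; lia.
move=> yA; case: (splitP (pi^-1 y)%g) => [i|j] Ei.
  case/imsetP: yA; exists i => //.
  by rewrite -(permKV pi y); congr (pi _); apply: val_inj; rewrite /= -Ei.
by exists j => //; rewrite -(permKV pi y); congr (pi _); apply: val_inj; rewrite /= -Ei.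
Qed.

Lemma alpha_submult m n :
  alpha (m + n) pat dash <= 'C(m + n, m) * alpha m pat dash * alpha n pat dash.
Proof.
rewrite !alphaE.
pose F (pi : 'S_(m + n)) :=
  ([set pi (lshift n i) | i in 'I_m],
   stdp (fun i => val (pi (lshift n i))),
   stdp (fun j => val (pi (rshift m j)))).
have -> : 'C(m + n, m) = #|[set A : {set 'I_(m + n)} | #|A| == m]|.
  by rewrite card_draws card_ord.
rewrite -!cardsX; apply: (card_le_inj (F := F)).
  move=> p1 p2 _ _ [EA EP EQ].
  have l := recon (@lshift_inj m n) EA EP.
  have EB := compl_shift p1; rewrite EA -compl_shift in EB.
  have r := recon (@rshift_inj m n) EB EQ.
  apply/permP => x; case: (splitP x) => [i|j] Ei.
    by have -> : x = lshift n i by apply: val_inj.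
  by have -> : x = rshift m j by apply: val_inj.
move=> pi; rewrite inE => av; rewrite !inE /=.
rewrite card_imset; last by move=> i j /perm_inj /lshift_inj.
rewrite card_ord eqxx /=.
rewrite -!(@finset.in_set _ (fun p => ~~ gcontains pat dash p)) -!/(Av _).
by rewrite (std_avoid (c := 0) _ av) // (std_avoid (c := m) _ av).
Qed.

End Gen.

Lemma ordvalE n (x : 'I_n) : val x = nat_of_ord x. Proof. by []. Qed.

Section Spec.
Variables (k : nat) (s : 'S_k).

Lemma pat1_lift a : one_dash_pat s (lift ord0 a) = (val (s a)).+1.
Proof. by rewrite /one_dash_pat liftK. Qed.

Lemma pat1_0 : one_dash_pat s ord0 = 0.
Proof. by rewrite /one_dash_pat unlift_none. Qed.

Lemma cont1_cont0 N (h : 'I_N -> nat) :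
  contf (one_dash_pat s) one_dash h -> contf (consec s) no_dash h.
Proof.
case/existsP=> f /and3P[/forallP H1 /forallP H2 /forallP H3].
apply/existsP; exists [ffun a => f (lift ord0 a)]; apply/and3P; split;
  apply/forallP=> a; apply/forallP=> b; rewrite !ffunE.
- apply/implyP=> ab; move/forallP: (H1 (lift ord0 a)) => /(_ (lift ord0 b)).
  by rewrite !lift0 ltnS ab.
- apply/implyP=> /andP[ab _].
  move/forallP: (H2 (lift ord0 a)) => /(_ (lift ord0 b)).
  by rewrite !lift0 eqSS ab /one_dash.
- move/forallP: (H3 (lift ord0 a)) => /(_ (lift ord0 b)).
  by rewrite !pat1_lift ltnS.
Qed.

Lemma alpha0_le1 n : alpha n (consec s) no_dash <= alpha n (one_dash_pat s) one_dash.
Proof.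
rewrite !alphaE; apply: subset_leq_card; apply/fintype.subsetP=> pi; rewrite !inE.
by rewrite !gcontainsE; apply: contra; apply: cont1_cont0.
Qed.

Section Pos.
Variables (n : nat) (p : 'I_n.+1).

Definition ep (i : 'I_p) : 'I_n.+1 := Ordinal (ltn_trans (ltn_ord i) (ltn_ord p)).

Lemma es_proof (j : 'I_(n - p)) : p.+1 + j < n.+1.
Proof. by move: (ltn_ord j) (ltn_ord p); lia. Qed.

Definition es (j : 'I_(n - p)) : 'I_n.+1 := Ordinal (es_proof j).

Lemma epE i : nat_of_ord (ep i) = 0 + nat_of_ord i. Proof. by []. Qed.
Lemma esE j : nat_of_ord (es j) = p.+1 + nat_of_ord j. Proof. by []. Qed.

Lemma pos_cases (x : 'I_n.+1) :
  [\/ exists i : 'I_p, x = ep i, x = p | exists j, x = es j].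
Proof.
case: (ltngtP x p) => [lt|gt|eq].
- by apply: Or31; exists (Ordinal lt); apply: val_inj.
- have lt : x - p.+1 < n - p by move: (ltn_ord x); lia.
  by apply: Or33; exists (Ordinal lt); apply: val_inj; rewrite /= /es /=; lia.
- by apply: Or32; apply: val_inj.
Qed.

Lemma suffix_occ (pi : 'S_n.+1) : val (pi p) = 0 ->
  contf (consec s) no_dash (fun j => val (pi (es j))) ->
  contf (one_dash_pat s) one_dash (fun x => val (pi x)).
Proof.
move=> pi0 /existsP[g /and3P[/forallP G1 /forallP G2 /forallP G3]].
have npi j : val (pi (es j)) != 0.
  apply/eqP=> E; have : pi (es j) = pi p by apply: val_inj; rewrite E pi0.
  by move/perm_inj/(congr1 (@nat_of_ord _)); rewrite ?ordvalE ?esE; lia.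
apply/existsP; exists [ffun a => if unlift ord0 a is Some j then es (g j) else p].
apply/and3P; split; apply/forallP=> a; apply/forallP=> b; rewrite !ffunE.
- case: (unliftP ord0 a) => [a'|] ->; case: (unliftP ord0 b) => [b'|] ->;
    rewrite ?liftK ?unlift_none ?lift0 //=.
  + apply/implyP; rewrite ltnS => ab.
    move/forallP: (G1 a') => /(_ b') /implyP /(_ ab); rewrite ?ordvalE ?esE; lia.
  + rewrite ?ordvalE ?esE; lia.
- case: (unliftP ord0 a) => [a'|] ->; case: (unliftP ord0 b) => [b'|] ->;
    rewrite ?liftK ?unlift_none ?lift0 //= ?andbF //.
  apply/implyP; rewrite eqSS => /andP[ab _].
  move/forallP: (G2 a') => /(_ b'); rewrite ab /no_dash /= => /eqP E.
  by rewrite ?esE E addnS.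
- case: (unliftP ord0 a) => [a'|] ->; case: (unliftP ord0 b) => [b'|] ->;
    rewrite ?liftK ?unlift_none ?pat1_lift ?pat1_0 ?ltnS ?ltnn //=.
  + by move/forallP: (G3 a') => /(_ b').
  + by rewrite pi0 ltn0.
  + by rewrite pi0 lt0n npi.
Qed.

Lemma suffix_set (pi : 'S_n.+1) : pi p = ord0 ->
  [set pi (es j) | j in 'I_(n - p)] =
  [set y | (y \notin [set pi (ep i) | i in 'I_p]) && (y != ord0)].
Proof.
move=> pi0; apply/setP=> y; rewrite !inE; apply/imsetP/andP.
  case=> j _ ->; split.
    apply/imsetP=> -[i _ /perm_inj /(congr1 (@nat_of_ord _))]; rewrite esE epE.
    by move: (ltn_ord i); lia.
  apply/eqP=> E; have : pi (es j) = pi p by rewrite E pi0.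
  by move/perm_inj/(congr1 (@nat_of_ord _)); rewrite ?ordvalE ?esE; lia.
case=> yA y0; case: (pos_cases (pi^-1 y)%g) => [[i Ei]|Ep|[j Ej]].
- by case/imsetP: yA; exists i => //; rewrite -Ei permKV.
- by move: y0; rewrite -(permKV pi y) Ep pi0 eqxx.
- by exists j => //; rewrite -Ej permKV.
Qed.

Lemma es_inj : injective es. Proof. exact: (val_inj_shift esE). Qed.
Lemma ep_inj : injective ep. Proof. exact: (val_inj_shift epE). Qed.

Lemma fixed_p_bound :
  #|[set pi in Av (one_dash_pat s) one_dash n.+1 | pi p == ord0]| <=
  'C(n, p) * alpha p (one_dash_pat s) one_dash * alpha (n - p) (consec s) no_dash.
Proof.
rewrite !alphaE.
pose F (pi : 'S_n.+1) :=
  ([set pi (ep i) | i in 'I_p],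
   stdp (fun i => val (pi (ep i))),
   stdp (fun j => val (pi (es j)))).
have -> : 'C(n, p) = #|[set A : {set 'I_n.+1} | A \subset [set~ ord0] & #|A| == p]|.
  by rewrite cards_draws cardsC1 card_ord.
rewrite -!cardsX; apply: (card_le_inj (F := F)).
  move=> p1 p2 H1 H2; move: H1 H2; rewrite !finset.in_set => /andP[_ /eqP e1] /andP[_ /eqP e2] [EA EP EQ].
  have l := recon ep_inj EA EP.
  have EB : [set p1 (es j) | j in 'I_(n - p)] = [set p2 (es j) | j in 'I_(n - p)].
    by rewrite (suffix_set e1) (suffix_set e2) EA.
  have r := recon es_inj EB EQ.
  apply/permP => x; case: (pos_cases x) => [[i ->]|->|[j ->]] //.
  by rewrite e1 e2.
move=> pi; rewrite !inE => /andP[av /eqP pi0] /=.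
apply/andP; split; first (apply/andP; split; first (apply/andP; split)).
- apply/fintype.subsetP=> y /imsetP[i _ ->]; rewrite !inE; apply/eqP=> E.
    have : pi (ep i) = pi p by rewrite E pi0.
    by move/perm_inj/(congr1 (@nat_of_ord _)); rewrite ?epE; move: (ltn_ord i); lia.
- by rewrite card_imset ?card_ord // => i j /perm_inj /ep_inj.
- have := std_avoid (pi := pi) (e := ep) (pat := one_dash_pat s) (dash := one_dash) epE av.
  by rewrite inE.
- have hinj : injective (fun j => nat_of_ord (pi (es j))).
    exact: (perm_val_inj (pi := pi) es_inj).
  rewrite gcontainsE (contf_ext _ _ (stdp_order hinj)).
  move: av; rewrite gcontainsE; apply: contra; apply: suffix_occ.
  by rewrite pi0.
Qed.

End Pos.

Lemma alpha1_rec n :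
  alpha n.+1 (one_dash_pat s) one_dash <=
  \sum_(p < n.+1) 'C(n, p) * alpha p (one_dash_pat s) one_dash *
                 alpha (n - p) (consec s) no_dash.
Proof.
rewrite alphaE -sum1_card (partition_big (fun pi : 'S_n.+1 => (pi^-1 ord0)%g) predT) //=.
apply: leq_sum => p _; apply: leq_trans (fixed_p_bound p).
rewrite sum1dep_card; apply: subset_leq_card; apply/fintype.subsetP=> pi; rewrite !inE.
case/andP=> -> /eqP <-; by rewrite permKV.
Qed.

End Spec.

Local Open Scope ring_scope.

Section A.
Variable R : realType.

Lemma geo (r c : R) : 0 < c -> c < r -> forall n,
  \sum_(j < n.+1) r ^+ j * c ^+ (n - j)%N <= r ^+ n * (r / (r - c)).
Proof.
move=> c0 cr; have rc0 : 0 < r - c by rewrite subr_gt0.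
have r0 : 0 < r by apply: lt_trans cr.
have q1 : 1 <= r / (r - c) by rewrite ler_pdivlMr // mul1r lerBlDr lerDl ltW.
elim=> [|n IH].
  by rewrite big_ord_recr big_ord0 /= add0r expr0 !mul1r.
rewrite big_ord_recr /= subnn expr0 mulr1.
have -> : \sum_(j < n.+1) r ^+ j * c ^+ (n.+1 - widen_ord (leqnSn n.+1) j)
        = c * \sum_(j < n.+1) r ^+ j * c ^+ (n - j)%N.
  rewrite mulr_sumr; apply: eq_bigr => j _ /=.
  rewrite subSn; last by rewrite -ltnS.
  by rewrite exprS mulrCA.
apply: (@le_trans _ _ (c * (r ^+ n * (r / (r - c))) + r ^+ n.+1)).
  by rewrite lerD2r ler_pM2l.
rewrite exprS.
have -> : c * (r ^+ n * (r / (r - c))) + r * r ^+ n = r * r ^+ n * (r / (r - c)).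
  by field; rewrite lt0r_neq0.
by [].
Qed.

End A.

Section A.
Variable R : realType.

Lemma a_bound (a b : nat -> R) (r c D : R) : 0 < c -> c < r -> 0 <= D ->
  (forall n, 0 <= b n) -> (forall n, b n <= D * c ^+ n) ->
  (forall n, 0 <= a n) ->
  (forall n, n.+1%:R * a n.+1 <= \sum_(j < n.+1) a j * b (n - j)%N) ->
  exists K, 1 <= K /\ forall n, a n <= K * r ^+ n.
Proof.
move=> c0 cr D0 b0 bD a0 rec.
have r0 : 0 < r by apply: lt_trans cr.
have rc0 : 0 < r - c by rewrite subr_gt0.
set S0 := D * (r / (r - c)).
have S00 : 0 <= S0 by rewrite mulr_ge0 // divr_ge0 // ltW.
set N := Num.bound (S0 / r).
have SN : S0 < r * N%:R.
  have h := archi_boundP (divr_ge0 S00 (ltW r0)).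
  have -> : S0 = r * (S0 / r) by field; rewrite lt0r_neq0.
  by rewrite ltr_pM2l.
set K := 1 + \sum_(j < N.+1) a j / r ^+ j.
have K1 : 1 <= K by rewrite lerDl sumr_ge0 // => j _; rewrite divr_ge0 // exprn_ge0 // ltW.
exists K; split => //.
have H0 : forall j, (j <= N)%N -> a j <= K * r ^+ j.
  move=> j jN; rewrite -ler_pdivrMr ?exprn_gt0 //.
  apply: (@le_trans _ _ (\sum_(j < N.+1) a j / r ^+ j)); last by rewrite lerDr.
  have jN' : (j < N.+1)%N by [].
  rewrite (bigD1 (Ordinal jN')) //= lerDl sumr_ge0 // => i _.
  by rewrite divr_ge0 // exprn_ge0 // ltW.
suff H : forall n j, (j <= n)%N -> a j <= K * r ^+ j.
  by move=> m; apply: (H m m (leqnn m)).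
elim=> [|n IH] j.
  by rewrite leqn0 => /eqP ->; apply: H0.
rewrite leq_eqVlt => /orP[/eqP ->|]; last by rewrite ltnS; apply: IH.
case: (leqP n.+1 N) => [nN|Nn]; first exact: H0.
have n1 : 0 < n.+1%:R :> R by rewrite ltr0n.
rewrite -(ler_pM2l n1).
apply: (le_trans (rec n)).
apply: (@le_trans _ _ (K * D * \sum_(j < n.+1) r ^+ j * c ^+ (n - j))).
  rewrite mulr_sumr; apply: ler_sum => i _.
  have := IH i (ltn_ord i); have := bD (n - i)%N => h1 h2.
  rewrite (_ : K * D * (r ^+ i * c ^+ (n - i)%N) = (K * r ^+ i) * (D * c ^+ (n - i)%N));
    last by ring.
  exact: ler_pM (a0 _) (b0 _) h2 h1.
apply: (@le_trans _ _ (K * D * (r ^+ n * (r / (r - c))))).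
  by apply: ler_wpM2l; [rewrite mulr_ge0 // (le_trans _ K1) | exact: geo].
rewrite (_ : K * D * (r ^+ n * (r / (r - c))) = K * r ^+ n * S0); last by rewrite /S0; ring.
rewrite (_ : n.+1%:R * (K * r ^+ n.+1) = K * r ^+ n * (r * n.+1%:R)); last by rewrite exprS; ring.
apply: ler_wpM2l; first by rewrite mulr_ge0 ?exprn_ge0 ?(le_trans _ K1) // ltW.
apply: (le_trans (ltW SN)); rewrite ler_pM2l // ler_nat; exact: ltnW.
Qed.

End A.

Section A.
Variable R : realType.

Lemma b_pow_bound (b : nat -> R) (m : nat) (c : R) : (0 < m)%N -> 0 < c -> c <= 1 ->
  (forall n, 0 <= b n) -> (forall n, b n <= 1) ->
  (forall p q, b (p + q)%N <= b p * b q) -> b m <= c ^+ m ->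
  forall i, b i <= (c ^+ m)^-1 * c ^+ i.
Proof.
move=> m0 c0 c1 b0 b1 bM bm.
have Hq : forall q j, b (q * m + j)%N <= c ^+ (q * m).
  elim=> [|q IH] j; first by rewrite mul0n add0n expr0.
  rewrite mulSn -addnA exprD.
  by apply: (le_trans (bM _ _)); apply: ler_pM => //.
move=> i; have := Hq (i %/ m)%N (i %% m)%N; rewrite -divn_eq => h.
have cm0 : 0 < c ^+ m by rewrite exprn_gt0.
rewrite ler_pdivlMl //; apply: (le_trans (ler_wpM2l (ltW cm0) h)).
rewrite -exprD; apply: ler_wiXn2l => //; first exact: ltW.
rewrite {1}(divn_eq i m) addnC leq_add2r; apply: ltnW; exact: ltn_pmod.
Qed.

Lemma pow_root (y : R) n : (0 < n)%N -> 0 <= y -> (y ^+ n) `^ n%:R^-1 = y.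
Proof.
move=> n0 y0; rewrite -powR_mulrn // -powRrM mulfV ?powRr1 //.
by rewrite pnatr_eq0 -lt0n.
Qed.

Lemma root_le (K y : R) n : (0 < n)%N -> 0 <= K -> 0 <= y -> K <= y ^+ n ->
  K `^ n%:R^-1 <= y.
Proof.
move=> n0 K0 y0 Ky; rewrite -(pow_root n0 y0).
apply: ge0_ler_powR => //.
by rewrite nnegrE exprn_ge0.
Qed.

Lemma bernoulli (x : R) n : 0 <= x -> 1 + n%:R * x <= (1 + x) ^+ n.
Proof.
move=> x0; elim: n => [|n IH]; first by rewrite mul0r addr0 expr0.
rewrite exprS -natr1.
have h : 0 <= (n%:R : R) by rewrite ler0n.
nra.
Qed.

Lemma root_bound (K : R) n : (0 < n)%N -> 1 <= K -> K `^ n%:R^-1 <= 1 + (K - 1) / n%:R.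
Proof.
move=> n0 K1; have n0' : 0 < n%:R :> R by rewrite ltr0n.
have Km : 0 <= K - 1 by lra.
have q : 0 <= (K - 1) / n%:R by apply: divr_ge0 => //; exact: ltW.
apply: root_le => //; first lra.
  lra.
apply: (le_trans _ (bernoulli _ q)).
rewrite mulrCA mulfV ?mulr1; last by rewrite gt_eqF.
lra.
Qed.

End A.

Section A.
Variable R : realType.

Lemma growth_abstract (a b : nat -> R) :
  (forall n, 0 <= b n) -> (forall n, b n <= a n) -> (forall n, b n <= 1) ->
  (forall p q, b (p + q)%N <= b p * b q) ->
  (forall n, n.+1%:R * a n.+1 <= \sum_(j < n.+1) a j * b (n - j)%N) ->
  exists L : R, ((fun n => a n `^ n%:R^-1) @ \oo --> L)%classic /\
                ((fun n => b n `^ n%:R^-1) @ \oo --> L)%classic.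
Proof.
move=> b0 ba b1 bM rec.
have a0 : forall n, 0 <= a n by move=> n; exact: le_trans (b0 n) (ba n).
pose S := [set x : R | exists2 n, (0 < n)%N & x = b n `^ n%:R^-1]%classic.
have Sne : (S !=set0)%classic by exists (b 1%N `^ 1%:R^-1); exists 1%N.
have Slb : has_lbound S by exists 0 => x [n _ ->]; exact: powR_ge0.
set L := inf S.
have L0 : 0 <= L by apply: lb_le_inf => // x [n _ ->]; exact: powR_ge0.
have Lle : forall n, (0 < n)%N -> L <= b n `^ n%:R^-1.
  by move=> n n0; apply: ge_inf => //; exists n.
have key : forall r, L < r -> exists K, 1 <= K /\ forall n, a n <= K * r ^+ n.
  move=> r Lr.
  have r0 : 0 < r by exact: le_lt_trans L0 Lr.
  set c := Num.min 1 ((L + r) / 2).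
  have c0 : 0 < c by rewrite lt_min ltr01 /=; lra.
  have c1 : c <= 1 by rewrite ge_min lexx.
  have cr : c < r by rewrite gt_min; apply/orP; right; lra.
  have [m m0 bm] : exists2 m, (0 < m)%N & b m <= c ^+ m.
    case: (ltP L 1) => L1.
      have Lc : L < c by rewrite lt_min L1 /=; lra.
      case: (inf_lt Sne Lc) => _ [m m0 ->] lt; exists m => //.
      have m0' : 0 < m%:R :> R by rewrite ltr0n.
      have := gt0_ltr_powR m0' (powR_ge0 (b m) m%:R^-1) (ltW c0) lt.
      rewrite -powRrM mulVf ?gt_eqF // powRr1 // powR_mulrn ?(ltW c0) //.
      exact: ltW.
    exists 1%N => //; rewrite expr1 le_min b1 /=.
    by apply: (le_trans (b1 1%N)); lra.
  have bD := b_pow_bound m0 c0 c1 b0 b1 bM bm.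
  apply: (a_bound c0 cr _ b0 bD a0 rec).
  by rewrite invr_ge0 exprn_ge0 // ltW.
have ub : forall e, 0 < e -> exists N, forall n, (N <= n)%N ->
    a n `^ n%:R^-1 <= L + e.
  move=> e e0; have [K [K1 HK]] := key (L + e / 2) ltac:(lra).
  set r := L + e / 2.
  have r0 : 0 <= r by rewrite /r; lra.
  have q0 : 0 <= (K - 1) * r / (e / 2).
    by apply: divr_ge0; [apply: mulr_ge0 => //; lra | lra].
  have hb := archi_boundP q0.
  exists (Num.bound ((K - 1) * r / (e / 2))).+1 => n Nn.
  have n0 : (0 < n)%N by apply: leq_trans Nn.
  have n0' : 0 < n%:R :> R by rewrite ltr0n.
  have nb : (Num.bound ((K - 1) * r / (e / 2)))%:R < n%:R :> R by rewrite ltr_nat.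
  have ninv : 0 <= n%:R^-1 :> R by rewrite invr_ge0 ltW.
  apply: (le_trans (ge0_ler_powR ninv (a0 n) _ (HK n))).
    by rewrite nnegrE mulr_ge0 ?exprn_ge0 //; lra.
  rewrite powRM ?exprn_ge0 //; last by lra.
  rewrite pow_root //.
  apply: (le_trans (ler_wpM2r r0 (root_bound n0 K1))).
  set t := (K - 1) * r / n%:R.
  have -> : (1 + (K - 1) / n%:R) * r = r + t by rewrite /t; field; rewrite gt_eqF.
  have : t <= e / 2.
    rewrite /t ler_pdivrMr //.
    have e20 : 0 < e / 2 by lra.
    have := ltr_pM2r e20 _ _; move=> _.
    have h1 : (K - 1) * r = ((K - 1) * r / (e / 2)) * (e / 2) by field; lra.
    rewrite h1 mulrC; apply: ler_wpM2l; first lra.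
    by apply: ltW; apply: (lt_trans hb nb).
  rewrite /r; lra.
have conv : forall x : nat -> R, (forall n, (0 < n)%N -> L <= x n) ->
    (forall n, x n <= a n `^ n%:R^-1) -> (x @ \oo --> L)%classic.
  move=> x xl xu; apply/cvgrPdist_le => e e0.
  have [N HN] := ub e e0.
  exists N.+1 => // n /= Nn.
  have h1 := xl n (leq_trans (ltn0Sn N) Nn).
  have h2 := le_trans (xu n) (HN n (ltnW Nn)).
  rewrite ler_norml; apply/andP; split; lra.
have ninv n : 0 <= n%:R^-1 :> R by rewrite invr_ge0 ler0n.
have bal n : b n `^ n%:R^-1 <= a n `^ n%:R^-1.
  by apply: (ge0_ler_powR (ninv n)); rewrite ?nnegrE //; apply: ba.
exists L; split.
  by apply: conv => // n n0; apply: (le_trans (Lle n n0)).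
by apply: conv.
Qed.

End A.

Theorem mainTheorem4 (R : realType) (k : nat) (hk : (3 <= k)%N) (s : 'S_k) :
  exists L : R,
    (growth_seq R (fun n => alpha n (one_dash_pat s) one_dash) @ \oo --> L)%classic /\
    (growth_seq R (fun n => alpha n (consec s) no_dash) @ \oo --> L)%classic.
Proof.
pose a n : R := (alpha n (one_dash_pat s) one_dash)%:R / (n`!)%:R.
pose b n : R := (alpha n (consec s) no_dash)%:R / (n`!)%:R.
have f0 n : 0 < (n`!)%:R :> R by rewrite ltr0n fact_gt0.
have b0 n : 0 <= b n by rewrite /b divr_ge0 // ltW.
have ba n : b n <= a n.
  by rewrite /b /a ler_pM2r ?invr_gt0 // ler_nat alpha0_le1.
have b1 n : b n <= 1.
  by rewrite /b ler_pdivrMr // mul1r ler_nat alpha_le_fact.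
have bM p q : b (p + q)%N <= b p * b q.
  rewrite /b.
  have hb := bin_fact (leq_addr q p).
  rewrite addKn in hb.
  rewrite -hb !natrM.
  have hx := alpha_submult (consec s) no_dash p q.
  have C0 : 0 < ('C(p + q, p))%:R :> R by rewrite ltr0n bin_gt0 leq_addr.
  apply: (@le_trans _ _ (('C(p + q, p) * alpha p (consec s) no_dash *
                         alpha q (consec s) no_dash)%:R /
             ('C(p + q, p)%:R * ((p`!)%:R * (q`!)%:R)))).
    by rewrite ler_pM2r ?ler_nat // invr_gt0 !mulr_gt0.
  rewrite !natrM le_eqVlt; apply/orP; left; apply/eqP.
  field.
  by rewrite !gt_eqF.
have rec n : n.+1%:R * a n.+1 <= \sum_(j < n.+1) a j * b (n - j)%N.
  rewrite /a factS natrM.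
  have -> : n.+1%:R * ((alpha n.+1 (one_dash_pat s) one_dash)%:R /
         (n.+1%:R * (n`!)%:R)) = (alpha n.+1 (one_dash_pat s) one_dash)%:R / (n`!)%:R :> R.
    field. by rewrite !gt_eqF // ltr0n.
  apply: (@le_trans _ _ ((\sum_(p < n.+1) 'C(n, p) * alpha p (one_dash_pat s) one_dash *
                 alpha (n - p) (consec s) no_dash)%:R / (n`!)%:R)).
    by rewrite ler_pM2r ?invr_gt0 // ler_nat alpha1_rec.
  rewrite natr_sum mulr_suml le_eqVlt; apply/orP; left; apply/eqP.
  apply: eq_bigr => j _.
  have hb := bin_fact (ltnSE (ltn_ord j)).
  rewrite /b -hb !natrM.
  field.
  by rewrite !pnatr_eq0 -!lt0n !fact_gt0 bin_gt0 -ltnS ltn_ord.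
exact: (growth_abstract b0 ba b1 bM rec).
Qed.
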